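(* Let $\mathbf{CRng}$ be the category of commutative (unital) rings and unital ring homomorphisms, and let $\mathcal{C}$ be the category whose objects are commutative rings and whose morphisms $S\to R$ are subunital maps $f\colon R\to S$ (maps preserving $0$, $+$ and multiplication but not necessarily $1$), with the evident (reversed) composition; equivalently $\mathcal{C}$ is the Kleisli category of the lift monad $(-)+1$ on $\mathbf{CRng}^{\mathrm{op}}$. For a commutative ring $R$ let $\mathrm{Pred}(R)$ be the set of idempotents $e=e^2$ of $R$, ordered by $e\le d$ iff $ed=e$. Define $\square\colon\mathcal{C}\to\mathbf{PoSets}^{\mathrm{op}}$ by $\square(R)=\mathrm{Pred}(R)$ and, for a subunital map $f\colon R\to S$ (a morphism $S\to R$ of $\mathcal{C}$), $\square(f)(e)=f(e)+(1-f(1))$. Then the forgetful functor $U\colon\int\square\to\mathcal{C}$ has a left adjoint $0$ with $0(R)=(R,0)$ and a right adjoint $1$ with $1(R)=(R,1)$; moreover there is a functor (comprehension) $\int\square\to\mathcal{C}$ with $(R,e)\mapsto eR$ which is right adjoint to $1$, and a functor (quotient) with $(R,e)\mapsto(1-e)R$ which is left adjoint to $0$, where $eR$ and $(1-e)R$ are commutative rings with units $e$ and $1-e$ respectively.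
   Context: For a functor $F\colon\mathcal{B}\to\mathbf{PoSets}^{\mathrm{op}}$, $\int F$ is the category with objects $(X,P)$, $P\in F(X)$, and morphisms $f\colon(X,P)\to(Y,Q)$ the morphisms $f\colon X\to Y$ of $\mathcal{B}$ with $P\le F(f)(Q)$; the forgetful functor sends $(X,P)\mapsto X$, $f\mapsto f$; $0$ and $1$ act as identity on morphisms. *)

(* Defs.v *)
From HB Require Import structures.
From mathcomp Require Import all_boot all_order all_algebra ring.
Set Implicit Arguments. Unset Strict Implicit. Unset Printing Implicit Defensive.
Import GRing.Theory.
Local Open Scope ring_scope.

Record Category := {
  Ob : Type;
  Hom : Ob -> Ob -> Type;
  idm : forall A, Hom A A;
  comp : forall A B C, Hom B C -> Hom A B -> Hom A C
}.
Arguments idm {c} A.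
Arguments comp {c A B C} g f.

Record Functor (C D : Category) := {
  fobj : Ob C -> Ob D;
  fmap : forall A B, Hom A B -> Hom (fobj A) (fobj B)
}.
Arguments fobj {C D} f _.
Arguments fmap {C D} f {A B} _.

Definition IsFunctor C D (F : Functor C D) : Prop :=
  (forall A, fmap F (idm A) = idm (fobj F A)) /\
  (forall A B E (g : Hom B E) (f : Hom A B),
      fmap F (comp g f) = comp (fmap F g) (fmap F f)).

Definition Adjunction C D (L : Functor D C) (R : Functor C D) : Prop :=
  exists phi : forall d c, Hom (fobj L d) c -> Hom d (fobj R c),
    (forall d c, bijective (phi d c)) /\
    (forall d' d c c' (h : Hom d' d) (f : Hom (fobj L d) c) (g : Hom c c'),
        phi d' c' (comp g (comp f (fmap L h))) =
        comp (fmap R g) (comp (phi d c f) h)).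

(* Grothendieck construction  int F  for  F : B -> PoSets^op.           *)
(* F X is a poset (carrier [P X], order [le]), F f : F Y -> F X.        *)
Record IdxPoset (B : Category) := {
  P : Ob B -> Type;
  le : forall X, P X -> P X -> Prop;
  act : forall X Y, Hom X Y -> P Y -> P X;
  le_refl : forall X (p : P X), le p p;
  le_trans : forall X (p q r : P X), le p q -> le q r -> le p r;
  act_mono : forall X Y (f : Hom X Y) p q, le p q -> le (act f p) (act f q);
  act_id : forall X (p : P X), act (idm X) p = p;
  act_comp : forall X Y Z (g : Hom Y Z) (f : Hom X Y) (r : P Z),
      act (comp g f) r = act f (act g r)
}.
Arguments le {B} i {X} _ _.
Arguments act {B} i {X Y} _ _.

Section Groth.
Variables (B : Category) (F : IdxPoset B).
Definition GObj := {X : Ob B & P F X}.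
Definition GHom (x y : GObj) :=
  {f : Hom (projT1 x) (projT1 y) | le F (projT2 x) (act F f (projT2 y))}.
Lemma Gid_proof (x : GObj) : le F (projT2 x) (act F (idm (projT1 x)) (projT2 x)).
Proof. by rewrite act_id; apply: le_refl. Qed.
Definition Gid (x : GObj) : GHom x x := exist _ (idm (projT1 x)) (Gid_proof x).
Lemma Gcomp_proof (x y z : GObj) (g : GHom y z) (f : GHom x y) :
  le F (projT2 x) (act F (comp (proj1_sig g) (proj1_sig f)) (projT2 z)).
Proof.
rewrite act_comp; apply: le_trans (proj2_sig f) _.
exact: act_mono (proj2_sig g).
Qed.
Definition Gcomp (x y z : GObj) (g : GHom y z) (f : GHom x y) : GHom x z :=
  exist _ (comp (proj1_sig g) (proj1_sig f)) (Gcomp_proof g f).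
Definition Groth : Category := {| Ob := GObj; Hom := GHom; idm := Gid; comp := Gcomp |}.
Definition Forget : Functor Groth B :=
  @Build_Functor Groth B (fun x : GObj => projT1 x)
     (fun (x y : GObj) (f : GHom x y) => proj1_sig f).
End Groth.

(* The category C: commutative (possibly zero) rings, morphisms S -> R *)
(* are subunital maps R -> S.                                           *)
Definition subunital (R S : comPzRingType) (f : R -> S) : Prop :=
  [/\ f 0 = 0, (forall x y, f (x + y) = f x + f y) &
      (forall x y, f (x * y) = f x * f y)].

Definition CHom (S R : comPzRingType) := {f : R -> S | subunital f}.

Lemma subunital_id (R : comPzRingType) : subunital (@id R).
Proof. by []. Qed.
Lemma subunital_comp (A B E : comPzRingType) (f : B -> A) (g : E -> B) :
  subunital f -> subunital g -> subunital (f \o g).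
Proof.
case=> f0 fD fM [g0 gD gM]; split=> /=; first by rewrite g0 f0.
  by move=> x y; rewrite gD fD.
by move=> x y; rewrite gM fM.
Qed.

Definition Cid (R : comPzRingType) : CHom R R := exist _ id (subunital_id R).
(* g : E -> B (in C: B -> E, a map E -> B), f : A -> B in C (map B -> A) *)
Definition Ccomp (A B E : comPzRingType) (g : CHom B E) (f : CHom A B) : CHom A E :=
  exist _ (proj1_sig f \o proj1_sig g) (subunital_comp (proj2_sig f) (proj2_sig g)).

Definition CC : Category :=
  {| Ob := comPzRingType; Hom := CHom; idm := Cid; comp := Ccomp |}.

Definition Pred (R : comPzRingType) := {e : R | e * e == e}.
Definition pred_le (R : comPzRingType) (e d : Pred R) : Prop :=
  proj1_sig e * proj1_sig d = proj1_sig e.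

Section SubunitalFacts.
Variables (R S : comPzRingType) (f : R -> S) (hf : subunital f).
Lemma sub_f0 : f 0 = 0. Proof. by case: hf. Qed.
Lemma sub_fD x y : f (x + y) = f x + f y. Proof. by case: hf. Qed.
Lemma sub_fM x y : f (x * y) = f x * f y. Proof. by case: hf. Qed.
Lemma sub_fN x : f (- x) = - f x.
Proof. by apply/eqP; rewrite -subr_eq0 opprK -sub_fD addNr sub_f0. Qed.
Lemma sub_fB x y : f (x - y) = f x - f y. Proof. by rewrite sub_fD sub_fN. Qed.
Lemma sub_f1 : f 1 * f 1 = f 1. Proof. by rewrite -sub_fM mulr1. Qed.
Lemma sub_f1r x : f x * f 1 = f x. Proof. by rewrite -sub_fM mulr1. Qed.
End SubunitalFacts.

Definition sq_val (R S : comPzRingType) (f : R -> S) (e : R) : S := f e + (1 - f 1).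

Lemma sq_idem (S R : comPzRingType) (f : CHom S R) (e : Pred R) :
  sq_val (proj1_sig f) (proj1_sig e) * sq_val (proj1_sig f) (proj1_sig e)
  == sq_val (proj1_sig f) (proj1_sig e).
Proof.
case: f e => f hf [e /eqP he] /=; rewrite /sq_val; apply/eqP.
have ha : f e * f e = f e by rewrite -sub_fM // he.
have hu := sub_f1 hf; have hau := sub_f1r hf e.
set a := f e in ha hau *; set u := f 1 in hu hau *.
transitivity (a * a + 2%:R * (a - a * u) + (1 - 2%:R * u + u * u)); first ring.
rewrite ha hau hu; ring.
Qed.

Definition square_act (S R : comPzRingType) (f : CHom S R) (e : Pred R) : Pred S :=
  exist _ (sq_val (proj1_sig f) (proj1_sig e)) (sq_idem f e).

Lemma square_le_refl (R : comPzRingType) (e : Pred R) : pred_le e e.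
Proof. by case: e => e he; rewrite /pred_le /=; apply/eqP. Qed.
Lemma square_le_trans (R : comPzRingType) (a b c : Pred R) :
  pred_le a b -> pred_le b c -> pred_le a c.
Proof.
case: a b c => a ? [b ?] [c ?]; rewrite /pred_le /= => hab hbc.
by rewrite -hab -mulrA hbc.
Qed.
Lemma square_mono (S R : comPzRingType) (f : CHom S R) (a b : Pred R) :
  pred_le a b -> pred_le (square_act f a) (square_act f b).
Proof.
case: f a b => f hf [a ha] [b hb]; rewrite /pred_le /= /sq_val => hab.
have hu := sub_f1 hf; have hau := sub_f1r hf a; have hbu := sub_f1r hf b.
have hab' : f a * f b = f a by rewrite -sub_fM // hab.
move: hab' hu hau hbu; set x := f a; set y := f b; set u := f 1 => h1 h2 h3 h4.
transitivity (x * y + (x - x * u) + (y - y * u) + (1 - 2%:R * u + u * u)); first ring.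
rewrite h1 h2 h3 h4; ring.
Qed.
Lemma square_id (R : comPzRingType) (e : Pred R) : square_act (Cid R) e = e.
Proof. by apply: val_inj => /=; rewrite /sq_val subrr addr0. Qed.
Lemma square_comp (A B E : comPzRingType) (g : CHom B E) (f : CHom A B) (r : Pred E) :
  square_act (Ccomp g f) r = square_act f (square_act g r).
Proof.
apply: val_inj; case: f g r => f hf [g hg] [r hr] /=; rewrite /sq_val /=.
by rewrite (sub_fD hf) (sub_fB hf); ring.
Qed.

Definition square : IdxPoset CC :=
  @Build_IdxPoset CC Pred (@pred_le) (@square_act)
    square_le_refl square_le_trans square_mono square_id square_comp.

Definition IntSq : Category := Groth square.
Definition U : Functor IntSq CC := Forget square.

Definition pred0 (R : comPzRingType) : Pred R := exist _ 0 (introT eqP (mulr0 0)).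
Definition pred1 (R : comPzRingType) : Pred R := exist _ 1 (introT eqP (mulr1 1)).

Lemma zero_hom_proof (R S : comPzRingType) (f : CHom R S) :
  pred_le (pred0 R) (square_act f (pred0 S)).
Proof. by rewrite /pred_le /= mul0r. Qed.
Lemma one_hom_proof (R S : comPzRingType) (f : CHom R S) :
  pred_le (pred1 R) (square_act f (pred1 S)).
Proof. by rewrite /pred_le /= /sq_val mul1r addrC subrK. Qed.

Definition ZeroF : Functor CC IntSq :=
  @Build_Functor CC IntSq (fun R : comPzRingType => existT _ R (pred0 R) : GObj square)
    (fun (R S : comPzRingType) (f : CHom R S) => exist _ f (zero_hom_proof f)).
Definition OneF : Functor CC IntSq :=
  @Build_Functor CC IntSq (fun R : comPzRingType => existT _ R (pred1 R) : GObj square)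
    (fun (R S : comPzRingType) (f : CHom R S) => exist _ f (one_hom_proof f)).

Section Corner.
Variables (R : comPzRingType) (e : Pred R).
Let ev := proj1_sig e.
Let he : ev * ev = ev := elimT eqP (proj2_sig e).

Record corner := Corner { cval : R; cvalP : cval * ev == cval }.
HB.instance Definition _ := [isSub for cval].
HB.instance Definition _ := [Choice of corner by <:].

Lemma c0P : (0 : R) * ev == 0. Proof. by rewrite mul0r. Qed.
Lemma cDP (x y : corner) : (cval x + cval y) * ev == cval x + cval y.
Proof. by rewrite mulrDl (eqP (cvalP x)) (eqP (cvalP y)). Qed.
Lemma cNP (x : corner) : (- cval x) * ev == - cval x.
Proof. by rewrite mulNr (eqP (cvalP x)). Qed.
Lemma c1P : ev * ev == ev. Proof. by rewrite he. Qed.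
Lemma cMP (x y : corner) : (cval x * cval y) * ev == cval x * cval y.
Proof. by rewrite -mulrA (eqP (cvalP y)). Qed.

Definition czero := Corner c0P.
Definition cadd x y := Corner (cDP x y).
Definition copp x := Corner (cNP x).
Definition cone := Corner c1P.
Definition cmul x y := Corner (cMP x y).

Lemma caddA : associative cadd. Proof. by move=> x y z; apply: val_inj; rewrite /= addrA. Qed.
Lemma caddC : commutative cadd. Proof. by move=> x y; apply: val_inj; rewrite /= addrC. Qed.
Lemma cadd0 : left_id czero cadd. Proof. by move=> x; apply: val_inj; rewrite /= add0r. Qed.
Lemma caddN : left_inverse czero copp cadd.
Proof. by move=> x; apply: val_inj; rewrite /= addNr. Qed.
HB.instance Definition _ := GRing.isZmodule.Build corner caddA caddC cadd0 caddN.

Lemma cmulA : associative cmul. Proof. by move=> x y z; apply: val_inj; rewrite /= mulrA. Qed.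
Lemma cmulC : commutative cmul. Proof. by move=> x y; apply: val_inj; rewrite /= mulrC. Qed.
Lemma cmul1 : left_id cone cmul.
Proof. by move=> x; apply: val_inj; rewrite /= mulrC (eqP (cvalP x)). Qed.
Lemma cmulDl : left_distributive cmul cadd.
Proof. by move=> x y z; apply: val_inj; rewrite /= mulrDl. Qed.
HB.instance Definition _ := GRing.Zmodule_isComPzRing.Build corner cmulA cmulC cmul1 cmulDl.

Definition cornerRing : comPzRingType := corner.
End Corner.

Lemma pred_compl_proof (R : comPzRingType) (e : Pred R) :
  (1 - proj1_sig e) * (1 - proj1_sig e) == 1 - proj1_sig e.
Proof.
case: e => e /eqP he /=; apply/eqP.
transitivity (1 - 2%:R * e + e * e); first ring. rewrite he; ring.
Qed.
Definition pred_compl (R : comPzRingType) (e : Pred R) : Pred R :=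
  exist _ (1 - proj1_sig e) (pred_compl_proof e).

Definition compr_obj (x : Ob IntSq) : Ob CC := cornerRing (projT2 x).
Definition quot_obj (x : Ob IntSq) : Ob CC := cornerRing (pred_compl (projT2 x)).

(* Main.v *)
Require Import Defs.
From mathcomp Require Import all_boot all_order all_algebra ring.
From Stdlib Require Import ProofIrrelevance FunctionalExtensionality.
Set Implicit Arguments. Unset Strict Implicit. Unset Printing Implicit Defensive.
Import GRing.Theory.
Local Open Scope ring_scope.

Lemma chom_ext (S R : comPzRingType) (f g : CHom S R) :
  (forall x, proj1_sig f x = proj1_sig g x) -> f = g.
Proof.
case: f g => f hf [g hg] /= H.
have E : f = g by apply: functional_extensionality.
subst g. by rewrite (proof_irrelevance _ hf hg).
Qed.

Lemma ghom_ext (x y : Ob IntSq) (f g : Defs.Hom (c:=IntSq) x y) : proj1_sig f = proj1_sig g -> f = g.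
Proof.
case: f g => f hf [g hg] /= E; subst g. by rewrite (proof_irrelevance _ hf hg).
Qed.

Lemma hom_cond (x y : Ob IntSq) (f : Defs.Hom (c:=IntSq) x y) :
  proj1_sig (projT2 x) * proj1_sig (proj1_sig f) (proj1_sig (projT2 y)) =
  proj1_sig (projT2 x) * proj1_sig (proj1_sig f) 1.
Proof.
case: x y f => R [e he] [S [d hd]] [[f hf] /= H].
move: H; rewrite /le /= /pred_le /= /sq_val => H.
transitivity (e * (f d + (1 - f 1)) - e + e * f 1); first ring.
by rewrite H; ring.
Qed.

Lemma corner_ext (R : comPzRingType) (e : Pred R) (a b : corner e) : cval a = cval b -> a = b.
Proof. exact: val_inj. Qed.

Lemma cornerE (R : comPzRingType) (e : Pred R) :
  [/\ cval (0 : cornerRing e) = 0, cval (1 : cornerRing e) = proj1_sig e,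
   (forall a b : cornerRing e, cval (a + b) = cval a + cval b) &
   (forall a b : cornerRing e, cval (a * b) = cval a * cval b)].
Proof. by split. Qed.

Lemma funcs : [/\ IsFunctor U, IsFunctor ZeroF & IsFunctor OneF].
Proof.
split; split => //; by move=> *; apply: ghom_ext.
Qed.

Lemma cmpP (R : comPzRingType) (e : Pred R) (a : R) :
  (a * proj1_sig e) * proj1_sig e == a * proj1_sig e.
Proof. by rewrite -mulrA (eqP (proj2_sig e)). Qed.

Definition cmp_fun (R S : comPzRingType) (e : Pred R) (d : Pred S) (f : S -> R)
  (c : corner d) : corner e := @Corner R e (f (cval c) * proj1_sig e) (cmpP e _).

Lemma cmp_sub (R S : comPzRingType) (e : Pred R) (d : Pred S) (f : S -> R) :
  subunital f -> subunital (@cmp_fun R S e d f : cornerRing d -> cornerRing e).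
Proof.
move=> hf; split.
- apply: val_inj => /=; by rewrite (sub_f0 hf) mul0r.
- move=> a b; apply: val_inj => /=; by rewrite (sub_fD hf) mulrDl.
- move=> a b; apply: val_inj => /=; rewrite (sub_fM hf).
  case: e => e /= /eqP he.
  by rewrite -[in LHS]he; ring.
Qed.

Definition Cmp : Functor IntSq CC :=
  @Build_Functor IntSq CC compr_obj
   (fun (x y : GObj square) (f : GHom x y) =>
      exist _ (@cmp_fun (projT1 x) (projT1 y) (projT2 x) (projT2 y) (proj1_sig (proj1_sig f)))
        (cmp_sub _ _ (proj2_sig (proj1_sig f))) : CHom (compr_obj x) (compr_obj y)).

Lemma Cmp_functor : IsFunctor Cmp.
Proof.
split.
- move=> [R e]; apply: chom_ext => c; apply: val_inj => /=.
  exact: (eqP (cvalP c)).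
- move=> [A a] [B b] [E c0] [[g hg] Hg] [[f hf] Hf]; apply: chom_ext => c.
  apply: val_inj => /=.
  have := hom_cond (exist _ (exist _ f hf) Hf : Defs.Hom (c:=IntSq) (existT _ A a) (existT _ B b)).
  rewrite /= => H.
  rewrite (sub_fM hf). by rewrite -mulrA [f (sval b) * _]mulrC H [sval a * _]mulrC mulrA (sub_f1r hf).
Qed.

Definition Qf : Functor IntSq CC :=
  @Build_Functor IntSq CC quot_obj
   (fun (x y : GObj square) (f : GHom x y) =>
      exist _ (@cmp_fun (projT1 x) (projT1 y) (pred_compl (projT2 x)) (pred_compl (projT2 y))
                (proj1_sig (proj1_sig f)))
        (cmp_sub _ _ (proj2_sig (proj1_sig f))) : CHom (quot_obj x) (quot_obj y)).

Lemma compl_zero (R : comPzRingType) (e : Pred R) (c : corner (pred_compl e)) :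
  cval c * proj1_sig e = 0.
Proof.
case: c => c /= /eqP hc; case: e hc => e /= /eqP he hc.
rewrite -hc -mulrA mulrBl mul1r he subrr mulr0 //.
Qed.

Lemma Q_functor : IsFunctor Qf.
Proof.
split.
- move=> [R e]; apply: chom_ext => c; apply: val_inj => /=.
  exact: (eqP (cvalP c)).
- move=> [A a] [B b] [E c0] [[g hg] Hg] [[f hf] Hf]; apply: chom_ext => c.
  apply: val_inj => /=.
  have := hom_cond (exist _ (exist _ g hg) Hg : Defs.Hom (c:=IntSq) (existT _ B b) (existT _ E c0)).
  rewrite /= => H.
  have Z : g (cval c) * sval b = 0.
    rewrite -(sub_f1r hg) -mulrA [g 1 * _]mulrC -H mulrCA -(sub_fM hg).
    by rewrite (compl_zero c) (sub_f0 hg) mulr0.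
  by rewrite [g _ * (1 - _)]mulrBr mulr1 Z subr0.
Qed.

Lemma zero_le (R S : comPzRingType) (g : CHom R S) (p : Pred S) :
  pred_le (Defs.pred0 R) (square_act g p).
Proof. by rewrite /pred_le /= mul0r. Qed.

Lemma one_le (R S : comPzRingType) (g : CHom R S) (e : Pred R) :
  pred_le e (square_act g (Defs.pred1 S)).
Proof. by rewrite /pred_le /= /sq_val addrC subrK mulr1. Qed.

Lemma adj0U : Adjunction ZeroF U.
Proof.
exists (fun d c (f : Defs.Hom (c:=IntSq) (fobj ZeroF d) c) => proj1_sig f).
split => //.
move=> d c; exists (fun g : CHom d (projT1 c) =>
   exist _ g (zero_le g (projT2 c)) : Defs.Hom (c:=IntSq) (fobj ZeroF d) c) => //.
by move=> f; apply: ghom_ext.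
Qed.

Lemma adjU1 : Adjunction U OneF.
Proof.
exists (fun d c (g : CHom (projT1 d) c) =>
   exist _ g (one_le g (projT2 d)) : Defs.Hom (c:=IntSq) d (fobj OneF c)).
split; last by move=> *; apply: ghom_ext.
move=> d c; exists (fun f : Defs.Hom (c:=IntSq) d (fobj OneF c) => proj1_sig f) => //.
by move=> f; apply: ghom_ext.
Qed.

Section Restr.
Variables (R S : comPzRingType) (d : Pred S).

Lemma restr_sub (f : S -> R) : subunital f ->
  subunital (fun s : cornerRing d => f (cval s)).
Proof. by move=> hf; split => [|x y|x y] /=; rewrite ?(sub_f0 hf) ?(sub_fD hf) ?(sub_fM hf). Qed.

Definition ext_fun (g : cornerRing d -> R) (s : S) : R :=
  g (@Corner S d (s * proj1_sig d) (cmpP d s)).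

Lemma ext_sub (g : cornerRing d -> R) : subunital g -> subunital (ext_fun g).
Proof.
move=> hg; rewrite /ext_fun; split.
- rewrite -(sub_f0 hg); congr g; apply: val_inj => /=; by rewrite mul0r.
- move=> x y; rewrite -(sub_fD hg); congr g; apply: val_inj => /=; by rewrite mulrDl.
- move=> x y; rewrite -(sub_fM hg); congr g; apply: val_inj => /=.
  case: d => dv /= /eqP hd. by rewrite mulrACA hd.
Qed.

Lemma ext_le (g : CHom R (cornerRing d)) :
  pred_le (Defs.pred1 R) (square_act (exist _ (ext_fun (proj1_sig g)) (ext_sub (proj2_sig g)) : CHom R S) d).
Proof.
rewrite /pred_le /= /sq_val /ext_fun mul1r.
have -> : (@Corner S d (proj1_sig d * proj1_sig d) (cmpP d (proj1_sig d))) =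
          (@Corner S d (1 * proj1_sig d) (cmpP d 1)).
  by apply: val_inj => /=; rewrite (eqP (proj2_sig d)) mul1r.
by rewrite addrC subrK.
Qed.
End Restr.

Lemma adj1Cmp : Adjunction OneF Cmp.
Proof.
exists (fun (R : comPzRingType) c (f : Defs.Hom (c:=IntSq) (fobj OneF R) c) =>
   exist _ (fun s : cornerRing (projT2 c) => proj1_sig (proj1_sig f) (cval s))
     (@restr_sub _ _ (projT2 c) _ (proj2_sig (proj1_sig f))) : CHom R (compr_obj c)).
split.
- move=> R [S d]; exists (fun g : CHom R (compr_obj (existT _ S d)) =>
    exist _ (exist _ (ext_fun (proj1_sig g)) (ext_sub (proj2_sig g)) : CHom R S) (ext_le g)
     : Defs.Hom (c:=IntSq) (fobj OneF R) (existT _ S d)).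
  + move=> [[f hf] Hf]; apply: ghom_ext; apply: chom_ext => s /=.
    have := hom_cond (exist _ (exist _ f hf) Hf : Defs.Hom (c:=IntSq) (existT _ R (Defs.pred1 R)) (existT _ S d)).
    rewrite /= !mul1r => H.
    by rewrite /ext_fun /= (sub_fM hf) H (sub_f1r hf).
  + move=> [g hg]; apply: chom_ext => s /=; rewrite /ext_fun; congr g.
    by apply: val_inj => /=; rewrite (eqP (cvalP s)).
- move=> R' R [S d] [S' d'] h [[f hf] Hf] [[g hg] Hg]; apply: chom_ext => s /=.
  have := hom_cond (exist _ (exist _ f hf) Hf : Defs.Hom (c:=IntSq) (existT _ R (Defs.pred1 R)) (existT _ S d)).
  rewrite /= !mul1r => H.
  by rewrite (sub_fM hf) H (sub_f1r hf).
Qed.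

Lemma hom0_cond (S : comPzRingType) (d : Ob IntSq)
  (f : Defs.Hom (c:=IntSq) d (fobj ZeroF S)) :
  proj1_sig (projT2 d) * proj1_sig (proj1_sig f) 1 = 0.
Proof.
have := hom_cond f; rewrite /= (sub_f0 (proj2_sig (proj1_sig f))) mulr0 => H.
by rewrite -H.
Qed.

Lemma qext_P (S : comPzRingType) (d : Ob IntSq)
  (f : Defs.Hom (c:=IntSq) d (fobj ZeroF S)) (s : S) :
  proj1_sig (proj1_sig f) s * proj1_sig (pred_compl (projT2 d)) == proj1_sig (proj1_sig f) s.
Proof.
apply/eqP => /=; rewrite mulrBr mulr1 -(sub_f1r (proj2_sig (proj1_sig f))).
by rewrite -mulrA [_ 1 * _]mulrC hom0_cond mulr0 subr0.
Qed.

Lemma cval_sub (R S : comPzRingType) (e : Pred R) (g : S -> cornerRing e) :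
  subunital g -> subunital (fun s => cval (g s)).
Proof.
move=> hg; split => [|x y|x y]; by rewrite ?(sub_f0 hg) ?(sub_fD hg) ?(sub_fM hg).
Qed.

Lemma qle (S : comPzRingType) (d : Ob IntSq) (g : CHom (quot_obj d) S) :
  pred_le (projT2 d) (square_act (exist _ (fun s => cval (proj1_sig g s))
       (cval_sub (proj2_sig g)) : CHom (projT1 d) S) (Defs.pred0 S)).
Proof.
rewrite /pred_le /= /sq_val.
have := sub_f0 (proj2_sig g); move=> ->.
have Z := compl_zero (proj1_sig g 1).
by rewrite add0r mulrBr mulr1 mulrC Z subr0.
Qed.

Definition qext (S : comPzRingType) (d : Ob IntSq)
  (f : Defs.Hom (c:=IntSq) d (fobj ZeroF S)) (s : S) : cornerRing (pred_compl (projT2 d)) :=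
  @Corner _ (pred_compl (projT2 d)) (proj1_sig (proj1_sig f) s) (qext_P f s).

Lemma qext_sub (S : comPzRingType) (d : Ob IntSq)
  (f : Defs.Hom (c:=IntSq) d (fobj ZeroF S)) : subunital (qext f).
Proof.
have hf := proj2_sig (proj1_sig f).
split => [|x y|x y]; apply: val_inj => /=; by rewrite ?(sub_f0 hf) ?(sub_fD hf) ?(sub_fM hf).
Qed.

Lemma adjQ0 : Adjunction Qf ZeroF.
Proof.
exists (fun d (S : comPzRingType) (g : CHom (quot_obj d) S) =>
   exist _ (exist _ (fun s => cval (proj1_sig g s)) (cval_sub (proj2_sig g)) : CHom (projT1 d) S)
     (qle g) : Defs.Hom (c:=IntSq) d (fobj ZeroF S)).
split.
- move=> d S; exists (fun f : Defs.Hom (c:=IntSq) d (fobj ZeroF S) =>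
     exist _ (qext f) (qext_sub f) : CHom (quot_obj d) S).
  + move=> g; apply: chom_ext => s; exact: val_inj.
  + move=> f; apply: ghom_ext; exact: chom_ext.
- move=> [R' e'] [R e] S S' [[h hh] Hh] [f hf] [g hg]; apply: ghom_ext; apply: chom_ext => s /=.
  have := hom_cond (exist _ (exist _ h hh) Hh : Defs.Hom (c:=IntSq) (existT _ R' e') (existT _ R e)).
  rewrite /= => H.
  set v := cval (f (g s)).
  have Z : v * sval e = 0 by exact: compl_zero.
  have Z2 : h v * sval e' = 0.
    rewrite -(sub_f1r hh v) -mulrA [h 1 * _]mulrC -H mulrCA -(sub_fM hh) Z.
    by rewrite (sub_f0 hh) mulr0.
  by rewrite mulrBr mulr1 Z2 subr0.
Qed.

Theorem mainTheorem6 :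
  [/\ IsFunctor U, IsFunctor ZeroF & IsFunctor OneF] /\
  Adjunction ZeroF U /\
  Adjunction U OneF /\
  (exists Cmp : Functor IntSq CC,
      (forall x, fobj Cmp x = compr_obj x) /\ IsFunctor Cmp /\ Adjunction OneF Cmp) /\
  (exists Q : Functor IntSq CC,
      (forall x, fobj Q x = quot_obj x) /\ IsFunctor Q /\ Adjunction Q ZeroF).
Proof.
split; first exact: funcs.
split; first exact: adj0U.
split; first exact: adjU1.
split.
- by exists Cmp; split => //; split; [exact: Cmp_functor | exact: adj1Cmp].
- by exists Qf; split => //; split; [exact: Q_functor | exact: adjQ0].
Qed.
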